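(* Let $x \in (-1/\phi, 1/\phi)$, where $\phi = (1+\sqrt{5})/2$, and let $m \geq 1$ be an integer. Then \[ \sum_{r=1}^{\infty} r^m F_r x^r = \frac{1}{1 - x - x^2} \sum_{i=1}^m \binom{m}{i} (-1)^{i + 1} \sum_{r=1}^{\infty} r^{m - i} F_r x^r + \frac{x^2}{1 - x - x^2} \sum_{i=1}^m \binom{m}{i} \sum_{r=1}^{\infty} r^{m - i} F_r x^r . \]
   Context: $(F_r)_{r \geq 0}$ is the Fibonacci sequence: $F_0 = 0$, $F_1 = 1$, $F_r = F_{r-1} + F_{r-2}$ for $r \geq 2$. For every integer $j \ge 0$ and $x \in (-1/\phi,1/\phi)$ the series $\sum_{r\ge1} r^j F_r x^r$ converges. *)

(* Defs.v *)
From Stdlib Require Import Reals Lra.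
From Coquelicot Require Import Coquelicot.
Open Scope R_scope.

Fixpoint fib (r : nat) : nat :=
  match r with
  | O => O
  | S r' => match r' with
            | O => 1%nat
            | S r'' => (fib r' + fib r'')%nat
            end
  end.

Definition phi : R := (1 + sqrt 5) / 2.

(* The series  sum_{r >= 1} r^j F_r x^r, indexed by n = r - 1. *)
Definition fib_moment (j : nat) (x : R) : R :=
  Series (fun n : nat => INR (S n) ^ j * INR (fib (S n)) * x ^ (S n)).

(* Main.v *)
Require Import Defs.
From Stdlib Require Import Reals Lra Lia Psatz.
From Coquelicot Require Import Coquelicot.
Open Scope R_scope.
Lemma lim_invn : is_lim_seq (fun n => / (INR n + 1)) 0.
Proof.
  replace (Finite 0) with (Rbar_inv p_infty) by reflexivity.
  apply is_lim_seq_inv; [|discriminate].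
  eapply is_lim_seq_ext; [|apply (proj1 (is_lim_seq_incr_1 INR p_infty)), is_lim_seq_INR].
  intro n. cbv beta. rewrite S_INR. reflexivity.
Qed.

Lemma lim_ratio (j : nat) (q : R) :
  is_lim_seq (fun n => (1 + / (INR n + 1)) ^ j * q) q.
Proof.
  assert (H : is_lim_seq (fun n => (1 + / (INR n + 1)) ^ j) 1).
  { induction j as [|j IH]; simpl.
  - apply is_lim_seq_const.
  - assert (H2 := is_lim_seq_mult' _ _ _ _ (is_lim_seq_plus' _ _ _ _ (is_lim_seq_const 1) lim_invn) IH).
    rewrite Rplus_0_r, Rmult_1_l in H2. exact H2. }
  assert (H2 := is_lim_seq_mult' _ _ _ _ H (is_lim_seq_const q)).
  rewrite Rmult_1_l in H2. exact H2.
Qed.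

Lemma ex_pow_geom (j : nat) (q : R) : 0 < q < 1 ->
  ex_series (fun n => (INR n + 1) ^ j * q ^ n).
Proof.
  intros Hq.
  assert (Hpos : forall n, 0 < (INR n + 1) ^ j * q ^ n).
  { intro n. apply Rmult_lt_0_compat; apply pow_lt; [pose proof (pos_INR n); lra | lra]. }
  apply (ex_series_ext (fun n => Rabs ((INR n + 1) ^ j * q ^ n))).
  { intro n. apply Rabs_pos_eq. left; auto. }
  apply (ex_series_DAlembert _ q); [lra| intro n; specialize (Hpos n); lra |].
  eapply is_lim_seq_ext; [|apply (lim_ratio j q)].
  intro n. cbv beta.
  assert (H1 : 0 < INR n + 1) by (pose proof (pos_INR n); lra).
  rewrite S_INR. simpl pow.
  assert (Hqn : 0 < q ^ n) by (apply pow_lt; lra).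
  rewrite Rabs_pos_eq.
  - replace (1 + / (INR n + 1)) with ((INR n + 1 + 1) / (INR n + 1)) by (field; lra).
    unfold Rdiv. rewrite Rpow_mult_distr, pow_inv. field. split; [lra|]. apply pow_nonzero; lra.
  - apply Rlt_le, Rdiv_lt_0_compat; [|apply Hpos].
    apply Rmult_lt_0_compat; [apply pow_lt; lra|].
    apply Rmult_lt_0_compat; [lra|apply pow_lt; lra].
Qed.

Lemma is_series_plusR (a b : nat -> R) la lb :
  is_series a la -> is_series b lb -> is_series (fun n => a n + b n) (la + lb).
Proof. intros Ha Hb. exact (is_series_plus a b la lb Ha Hb). Qed.

Lemma is_series_scalR (c : R) (a : nat -> R) l :
  is_series a l -> is_series (fun n => c * a n) (c * l).
Proof. intros Ha. exact (is_series_scal c a l Ha). Qed.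

Definition shift (f : nat -> R) (n : nat) : R :=
  match n with O => 0 | S k => f k end.

Lemma is_series_shift (f : nat -> R) l : is_series f l -> is_series (shift f) l.
Proof.
  intros H. apply is_series_decr_1.
  apply (is_series_ext f); [reflexivity|]. change (is_series f (l + - 0)). rewrite Ropp_0, Rplus_0_r. exact H.
Qed.

Lemma is_series_sum (c : nat -> R) (f : nat -> nat -> R) (l : nat -> R) (k : nat) :
  (forall i, is_series (f i) (l i)) ->
  is_series (fun n => sum_f_R0 (fun i => c i * f i n) k) (sum_f_R0 (fun i => c i * l i) k).
Proof.
  intros H. induction k as [|k IH]; simpl.
  - apply is_series_scalR, H.
  - apply is_series_plusR; [exact IH|]. apply is_series_scalR, H.
Qed.

Lemma sum_mult_r (f : nat -> R) (K : R) (n : nat) :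
  sum_f_R0 (fun i => f i * K) n = sum_f_R0 f n * K.
Proof. induction n as [|n IH]; simpl; [ring|rewrite IH; ring]. Qed.

Lemma sum_drop0 (a : nat -> R) (n : nat) :
  sum_f_R0 (fun i => if Nat.eqb i 0 then 0 else a i) n = sum_f_R0 a n - a 0%nat.
Proof. induction n as [|n IH]; simpl; [ring|rewrite IH; ring]. Qed.

Lemma C_m_0 (m : nat) : Binomial.C m 0 = 1.
Proof.
  unfold Binomial.C. rewrite Nat.sub_0_r. change (Factorial.fact 0) with 1%nat. change (INR 1) with 1.
  field. apply INR_fact_neq_0.
Qed.

Lemma binom_minus (m : nat) (y : R) :
  sum_f_R0 (fun i => if Nat.eqb i 0 then 0 else Binomial.C m i * (-1) ^ (i + 1) * y ^ (m - i)) m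
  = y ^ m - (y - 1) ^ m.
Proof.
  rewrite sum_drop0, C_m_0, Nat.sub_0_r.
  replace (y - 1) with (-1 + y) by ring. rewrite binomial.
  rewrite (sum_eq _ (fun i => Binomial.C m i * (-1) ^ i * y ^ (m - i) * -1)).
  - rewrite sum_mult_r. simpl. ring.
  - intros i _. rewrite pow_add. ring.
Qed.

Lemma binom_plus (m : nat) (y : R) :
  sum_f_R0 (fun i => if Nat.eqb i 0 then 0 else Binomial.C m i * y ^ (m - i)) m
  = (1 + y) ^ m - y ^ m.
Proof.
  rewrite sum_drop0, C_m_0, Nat.sub_0_r. rewrite binomial.
  rewrite (sum_eq (fun i => Binomial.C m i * 1 ^ i * y ^ (m - i)) (fun i => Binomial.C m i * y ^ (m - i))).
  - ring.
  - intros i _. rewrite pow1. ring.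
Qed.

Lemma phi_facts : 1 < phi /\ phi ^ 2 = phi + 1.
Proof.
  unfold phi. assert (H5 := sqrt_sqrt 5 ltac:(lra)).
  assert (Hs : 1 < sqrt 5).
  { rewrite <- sqrt_1. apply sqrt_lt_1; lra. }
  split; [lra|]. simpl. nra.
Qed.

Lemma fib_SS (n : nat) : fib (S (S n)) = (fib (S n) + fib n)%nat.
Proof. reflexivity. Qed.

Lemma fib_bound (n : nat) : INR (fib n) <= phi ^ n.
Proof.
  destruct phi_facts as [H1 H2].
  assert (H : forall n, INR (fib n) <= phi ^ n /\ INR (fib (S n)) <= phi ^ (S n)).
  { induction n0 as [|k [IH1 IH2]].
    - simpl. lra.
    - split; [exact IH2|]. rewrite fib_SS, plus_INR.
      replace (phi ^ S (S k)) with (phi ^ 2 * phi ^ k) by (rewrite <- pow_add; reflexivity).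
      rewrite H2. replace (phi ^ S k) with (phi * phi ^ k) in IH2 by reflexivity. nra. }
  apply H.
Qed.

Definition g (x : R) (j n : nat) : R := INR n ^ j * INR (fib n) * x ^ n.

Lemma ex_series_g (x : R) (j : nat) : -(1 / phi) < x < 1 / phi -> ex_series (g x j).
Proof.
  intros Hx. destruct phi_facts as [H1 H2].
  set (q := phi * Rabs x).
  assert (Hq0 : 0 <= q) by (unfold q; apply Rmult_le_pos; [lra|apply Rabs_pos]).
  assert (Hq1 : q < 1).
  { unfold q. assert (Rabs x < 1 / phi) by (apply Rabs_def1; lra).
    apply (Rmult_lt_compat_l phi) in H; [|lra]. replace (phi * (1/phi)) with 1 in H by (field; lra). lra. }
  set (q' := (1 + q) / 2).
  apply (@ex_series_le R_AbsRing R_CompleteNormedModule (g x j) (fun n => (INR n + 1) ^ j * q' ^ n)).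
  2: { apply ex_pow_geom. unfold q'. lra. }
  intro n. change (norm (g x j n)) with (Rabs (g x j n)). unfold g.
  rewrite !Rabs_mult, <- !RPow_abs.
  rewrite (Rabs_pos_eq (INR n)) by apply pos_INR.
  rewrite (Rabs_pos_eq (INR (fib n))) by apply pos_INR.
  assert (Hn : 0 <= INR n) by apply pos_INR.
  rewrite Rmult_assoc.
  apply Rmult_le_compat.
  - apply pow_le; lra.
  - apply Rmult_le_pos; [apply pos_INR|apply pow_le, Rabs_pos].
  - apply pow_incr; lra.
  - apply Rle_trans with (phi ^ n * Rabs x ^ n).
    + apply Rmult_le_compat_r; [apply pow_le, Rabs_pos|apply fib_bound].
    + rewrite <- Rpow_mult_distr. apply pow_incr. fold q. unfold q'. lra.
Qed.

Theorem theorem4p1 (x : R) (m : nat) :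
  -(1 / phi) < x < 1 / phi -> (1 <= m)%nat ->
  fib_moment m x =
    1 / (1 - x - x ^ 2) *
      sum_f_R0 (fun i => if Nat.eqb i 0 then 0 else
                  Binomial.C m i * (-1) ^ (i + 1) * fib_moment (m - i) x) m
  + x ^ 2 / (1 - x - x ^ 2) *
      sum_f_R0 (fun i => if Nat.eqb i 0 then 0 else
                  Binomial.C m i * fib_moment (m - i) x) m.
Proof.
  intros Hx Hm.
  destruct phi_facts as [H1 H2].
  assert (Hg : forall j, is_series (g x j) (fib_moment j x)).
  { intro j. apply is_series_decr_1.
    assert (E : g x j 0 = 0) by (unfold g; simpl; ring).
    rewrite E. change (is_series (fun k => g x j (S k)) (fib_moment j x + - 0)).
    rewrite Ropp_0, Rplus_0_r. unfold fib_moment.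
    apply (Series_correct (fun n => g x j (S n))).
    apply (ex_series_incr_1 (g x j)). apply ex_series_g; auto. }
  set (c1 := fun i => if Nat.eqb i 0 then 0 else Binomial.C m i * (-1) ^ (i + 1)).
  set (c2 := fun i => if Nat.eqb i 0 then 0 else Binomial.C m i).
  set (S := fib_moment m x).
  set (R1 := sum_f_R0 (fun i => c1 i * fib_moment (m - i) x) m).
  set (R2 := sum_f_R0 (fun i => c2 i * fib_moment (m - i) x) m).
  assert (E1 : sum_f_R0 (fun i => if Nat.eqb i 0 then 0 else
                  Binomial.C m i * (-1) ^ (i + 1) * fib_moment (m - i) x) m = R1).
  { unfold R1. apply sum_eq. intros i _. unfold c1. destruct (Nat.eqb i 0); ring. }
  assert (E2 : sum_f_R0 (fun i => if Nat.eqb i 0 then 0 else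
                  Binomial.C m i * fib_moment (m - i) x) m = R2).
  { unfold R2. apply sum_eq. intros i _. unfold c2. destruct (Nat.eqb i 0); ring. }
  rewrite E1, E2.
  assert (L1 := is_series_sum c1 (fun i => g x (m - i)) (fun i => fib_moment (m - i) x) m
                  (fun i => Hg (m - i)%nat)).
  assert (L2 := is_series_sum c2 (fun i => g x (m - i)) (fun i => fib_moment (m - i) x) m
                  (fun i => Hg (m - i)%nat)).
  fold R1 in L1. fold R2 in L2.
  assert (P1 : forall n, sum_f_R0 (fun i => c1 i * g x (m - i) n) m
                 = (INR n ^ m - (INR n - 1) ^ m) * INR (fib n) * x ^ n).
  { intro n. rewrite <- binom_minus, Rmult_assoc, <- sum_mult_r. apply sum_eq.
    intros i _. unfold c1, g. destruct (Nat.eqb i 0); ring. }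
  assert (P2 : forall n, sum_f_R0 (fun i => c2 i * g x (m - i) n) m
                 = ((1 + INR n) ^ m - INR n ^ m) * INR (fib n) * x ^ n).
  { intro n. rewrite <- binom_plus, Rmult_assoc, <- sum_mult_r. apply sum_eq.
    intros i _. unfold c2, g. destruct (Nat.eqb i 0); ring. }
  assert (HS := Hg m). fold S in HS.
  assert (HB := is_series_shift _ _ (is_series_scalR x _ _ HS)).
  assert (HC := is_series_shift _ _ (is_series_shift _ _ (is_series_scalR (x ^ 2) _ _ HS))).
  assert (HD := is_series_plusR _ _ _ _ (is_series_plusR _ _ _ _ HS (is_series_scalR (-1) _ _ HB))
                  (is_series_scalR (-1) _ _ HC)).
  assert (HE := is_series_plusR _ _ _ _ L1
                  (is_series_shift _ _ (is_series_shift _ _ (is_series_scalR (x ^ 2) _ _ L2)))).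
  assert (Key : S + -1 * (x * S) + -1 * (x ^ 2 * S) = R1 + x ^ 2 * R2).
  { apply is_series_unique in HD. apply is_series_unique in HE. etransitivity; [symmetry; exact HD|]. etransitivity; [|exact HE].
    apply Series_ext. intro n. cbv beta.
    rewrite P1. destruct n as [|[|k]]; unfold shift.
    - unfold g. simpl. ring.
    - unfold g. simpl INR. simpl fib. replace (1 - 1) with 0 by ring.
      rewrite pow_i by lia. rewrite pow1. simpl. ring.
    - cbv beta. rewrite P2. unfold g. rewrite fib_SS, plus_INR.
      rewrite !S_INR.
      replace (INR k + 1 + 1 - 1) with (INR k + 1) by ring.
      replace (1 + INR k) with (INR k + 1) by ring.
      set (a := INR (fib (Datatypes.S k))). set (b := INR (fib k)).
      set (p2 := (INR k + 1 + 1) ^ m). set (p1 := (INR k + 1) ^ m). set (p0 := INR k ^ m).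
      simpl pow. ring. }
  assert (Hden : 0 < 1 - x - x ^ 2).
  { assert (Hinv : 1 / phi = phi - 1).
    { field_simplify; [|lra]. simpl in H2. apply Rmult_eq_reg_r with phi; [|lra].
      field_simplify; [|lra]. nra. }
    rewrite Hinv in Hx.
    replace (1 - x - x ^ 2) with ((phi - 1 - x) * (phi + x)) by (simpl in H2 |- *; nra).
    apply Rmult_lt_0_compat; lra. }
  apply Rmult_eq_reg_l with (1 - x - x ^ 2); [|lra].
  field_simplify; [|lra].
  rewrite Rplus_comm. rewrite <- (Rplus_comm R1). lra.
Qed.
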